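(* Let $p$ be an odd prime, $t,s$ positive integers with $p\nmid s$, $r=p^t$, $q=r^s$. Let $\varphi$ be a nontrivial multiplicative character of $\mathbb{F}_q$, and let $\overline{\varphi}^*$ denote the restriction of $\overline{\varphi}$ to $\mathbb{F}_r^*$. Put $$B=\sum_{x\in\mathbb{F}_q^*,\ \mathrm{Tr}_{q/r}(x+1)=0}\varphi(x).$$ Then $|B|=\sqrt{q}/\sqrt{r}$ if $\overline{\varphi}^*$ is nontrivial, and $|B|=\sqrt{q}/r$ if $\overline{\varphi}^*$ is trivial.
   Context: $\mathrm{Tr}_{q/r}$ is the trace map from $\mathbb{F}_q$ to $\mathbb{F}_r$. A multiplicative character of $\mathbb{F}_q$ is a homomorphism $\mathbb{F}_q^*\to\mathbb{C}^*$; $\overline{\varphi}$ is its complex conjugate; it is trivial if identically $1$. *)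

(* Defs.v *)
From mathcomp Require Import all_boot all_order all_algebra all_field.
Set Implicit Arguments. Unset Strict Implicit. Unset Printing Implicit Defensive.
Import GRing.Theory Num.Theory.
Local Open Scope ring_scope.

(* A multiplicative character of F: a group homomorphism F^* -> C^*,
   represented as a function on F (its value at 0 is irrelevant). *)
Definition mult_char (F : finFieldType) (phi : F -> algC) : Prop :=
  (forall x y : F, x != 0 -> y != 0 -> phi (x * y) = phi x * phi y) /\
  (forall x : F, x != 0 -> phi x != 0).

Definition trivial_char (F : finFieldType) (phi : F -> algC) : Prop :=
  forall x : F, x != 0 -> phi x = 1.

(* The restriction of conj(phi) to F_r^*, where F_r = {x | x^r = x} is the
   subfield of order r of F, is trivial. *)
Definition conj_restr_trivial (F : finFieldType) (r : nat) (phi : F -> algC) : Prop :=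
  forall x : F, x != 0 -> x ^+ r = x -> (phi x)^* = 1.

Definition trace_qr (F : finFieldType) (r s : nat) (x : F) : F :=
  \sum_(i < s) x ^+ (r ^ i).

(* Main.v *)
Require Import Defs.
From mathcomp Require Import all_boot all_order all_algebra all_field.
From mathcomp Require Import ring.
Import GRing.Theory Num.Theory.
Local Open Scope ring_scope.

Section Fiber.
Variable F : finFieldType.

Lemma fiber_card (A : {set F}) (h : F -> F) :
  (forall x y, h (x + y) = h x + h y) ->
  (forall x y, x \in A -> y \in A -> (x - y)%R \in A) ->
  (forall z, z \in h @: A ->
     #|[set x in A | h x == z]| = #|[set x in A | h x == 0]|) /\
  #|A| = muln #|h @: A| #|[set x in A | h x == 0]|.
Proof.
move=> hD AB.
have h0 : h 0 = 0.
  by apply: (addrI (h 0)); rewrite -hD !addr0.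
have hN : forall x, h (- x) = - h x.
  by move=> x; apply/eqP; rewrite -addr_eq0 -hD addNr h0.
have hB : forall x y, h (x - y) = h x - h y by move=> x y; rewrite hD hN.
have fib : forall z, z \in h @: A ->
     #|[set x in A | h x == z]| = #|[set x in A | h x == 0]|.
  move=> z /imsetP [y0 y0A ->].
  rewrite -(card_imset _ (addIr (- y0))).
  apply: eq_card => k; rewrite !inE.
  apply/imsetP/idP.
    move=> [x]; rewrite inE => /andP [xA /eqP hx] ->.
    by rewrite AB // hB hx subrr eqxx.
  move=> /andP [kA /eqP hk].
  have A0 : 0 \in A by rewrite -(subrr y0) AB.
  have AN : - y0 \in A by rewrite -sub0r AB.
  exists (k + y0); last by rewrite addrK.
  by rewrite inE -(opprK y0) AB //= hB hk sub0r hN !opprK.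
split; first exact: fib.
rewrite -sum1_card (partition_big_imset h) /=.
rewrite (eq_bigr (fun _ => #|[set x in A | h x == 0]|)).
  by rewrite sum_nat_const.
move=> z zA; rewrite -(fib z zA) -sum1_card; apply: eq_bigl => x; by rewrite inE.
Qed.
End Fiber.

Section Char.
Variables (F : finFieldType) (phi : F -> algC).
Hypothesis (mc : mult_char phi).

Lemma phiM x y : x != 0 -> y != 0 -> phi (x * y) = phi x * phi y.
Proof. by case: mc => h _; apply: h. Qed.

Lemma phi_nz x : x != 0 -> phi x != 0.
Proof. by case: mc => _ h; apply: h. Qed.

Lemma phi1 : phi 1 = 1.
Proof.
have h := @phiM 1 1 (oner_neq0 F) (oner_neq0 F); rewrite mulr1 in h.
by apply: (mulfI (@phi_nz 1 (oner_neq0 F))); rewrite mulr1 -h.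
Qed.

Lemma phiX x n : x != 0 -> phi (x ^+ n) = phi x ^+ n.
Proof.
move=> xnz; elim: n => [|n IH]; first by rewrite !expr0 phi1.
by rewrite !exprS phiM ?expf_neq0 // IH.
Qed.

Lemma phi_unit x : x != 0 -> phi x * (phi x)^* = 1.
Proof.
move=> xnz.
have cgt : (1 < #|F|)%N.
  by rewrite (cardD1 0) (cardD1 1) !inE oner_neq0.
have e : x ^+ #|F|.-1 = 1.
  apply: (mulfI xnz); rewrite mulr1 -exprS prednK ?expf_card //.
  exact: ltnW.
have n1 : `|phi x| ^+ #|F|.-1 = 1 by rewrite -normrX -phiX // e phi1 normr1.
have : `|phi x| == 1.
  by rewrite -(pexpr_eq1 (n := #|F|.-1)) ?n1 // -ltnS prednK // ltnW.
by move/eqP => h; rewrite -normCK h expr1n.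
Qed.

Lemma phi_conj x : x != 0 -> (phi x)^* = phi x^-1.
Proof.
move=> xnz; apply: (mulfI (phi_nz x xnz)).
by rewrite phi_unit // -phiM ?invr_eq0 // mulfV // phi1.
Qed.

Lemma sum_inv (P : pred F) a : a != 0 ->
  (forall u, P u -> u != 0) -> (forall u, P (a * u) = P u) ->
  \sum_(u | P u) phi u = phi a * \sum_(u | P u) phi u.
Proof.
move=> anz Pnz Pa.
rewrite [LHS](reindex_inj (mulfI anz)) /= mulr_sumr.
apply: eq_big => [u|u Pu]; first exact: (Pa u).
by rewrite phiM // Pnz // -Pa.
Qed.

Lemma sum_zero (P : pred F) a : a != 0 -> phi a != 1 ->
  (forall u, P u -> u != 0) -> (forall u, P (a * u) = P u) ->
  \sum_(u | P u) phi u = 0.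
Proof.
move=> anz pa Pnz Pa; have := @sum_inv P a anz Pnz Pa.
move/eqP; rewrite -subr_eq0 -{1}(mul1r (\sum_(u | P u) phi u)) -mulrBl.
by rewrite mulf_eq0 subr_eq0 eq_sym (negbTE pa) /= => /eqP.
Qed.

End Char.

Section Trace.
Variables (p t s : nat) (F : finFieldType).
Hypotheses (pp : prime p) (t0 : (0 < t)%N) (s0 : (0 < s)%N)
  (cardF : #|F| = ((p ^ t) ^ s)%N).

Local Notation r := (p ^ t)%N.
Local Notation T := (@trace_qr F (p ^ t) s).

Lemma pch : p \in [char F].
Proof. by apply: (card_finPcharP (n := (t * s)%N)) => //; rewrite cardF expnM. Qed.

Lemma r_gt1 : (1 < r)%N.
Proof. by rewrite -{1}(expn0 p) ltn_exp2l // prime_gt1. Qed.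

Lemma frobD n (x y : F) : (x + y) ^+ (r ^ n) = x ^+ (r ^ n) + y ^+ (r ^ n).
Proof.
apply: exprDn_pchar; rewrite (eq_pnat _ (charf_eq pch)) -expnM pnatX.
by rewrite pnat_id.
Qed.

Lemma TD (x y : F) : T (x + y) = T x + T y.
Proof. by rewrite /trace_qr -big_split; apply: eq_bigr => i _; rewrite frobD. Qed.

Lemma T0 : T 0 = 0.
Proof. by apply: (addrI (T 0)); rewrite -TD !addr0. Qed.

Lemma TN (x : F) : T (- x) = - T x.
Proof. by apply/eqP; rewrite -addr_eq0 -TD addNr T0. Qed.

Lemma TB (x y : F) : T (x - y) = T x - T y.
Proof. by rewrite TD TN. Qed.

Lemma frobsum (I : Type) (l : seq I) (P : pred I) (f : I -> F) :
  (\sum_(i <- l | P i) f i) ^+ r = \sum_(i <- l | P i) f i ^+ r.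
Proof.
apply: (big_morph (fun x => x ^+ r)).
  by move=> x y; have := frobD 1 x y; rewrite expn1.
by rewrite expr0n; case: (r) r_gt1.
Qed.

Lemma TFr (x : F) : T x ^+ r = T x.
Proof.
rewrite /trace_qr frobsum.
rewrite (eq_bigr (fun i : 'I_s => x ^+ (r ^ i.+1))); last first.
  by move=> i _; rewrite -exprM expnSr.
case: s s0 cardF => // s' _ cF.
rewrite big_ord_recr big_ord_recl /= -cF expf_card expn0 expr1 addrC.
by congr (_ + _); apply: eq_bigr.
Qed.

Lemma fixpow (l : F) n : l ^+ r = l -> l ^+ (r ^ n) = l.
Proof.
move=> hl; elim: n => [|n IH]; first by rewrite expn0 expr1.
by rewrite expnSr exprM IH hl.
Qed.

Lemma TZ (l x : F) : l ^+ r = l -> T (l * x) = l * T x.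
Proof.
move=> hl; rewrite /trace_qr mulr_sumr; apply: eq_bigr => i _.
by rewrite exprMn (fixpow l i hl).
Qed.

Lemma T1 : T 1 = s%:R.
Proof.
rewrite /trace_qr (eq_bigr (fun _ => 1)); last by move=> i _; rewrite expr1n.
by rewrite sumr_const card_ord.
Qed.

Lemma card_Fr_le : (#|[set x : F | x ^+ r == x]| <= r)%N.
Proof.
have szP : size ('X^r - 'X : {poly F}) = r.+1.
  rewrite size_polyDl ?size_polyXn // size_polyN size_polyX.
  by rewrite ltnS r_gt1.
have nz : ('X^r - 'X : {poly F}) != 0 by rewrite -size_poly_eq0 szP.
have := max_poly_roots nz (rs := enum [set x : F | x ^+ r == x]).
rewrite enum_uniq szP ltnS -cardE; apply => //.
apply/allP => x; rewrite mem_enum inE => /eqP hx.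
by rewrite /root !hornerE hx subrr.
Qed.

Lemma card_K_le : leq #|[set x : F | T x == 0]| (r ^ s.-1).
Proof.
pose P : {poly F} := \sum_(i < s) 'X^(r ^ i).
have szP : size P = (r ^ s.-1).+1.
  rewrite /P; case: s s0 => // s' _ /=.
  rewrite big_ord_recr /= addrC size_polyDl ?size_polyXn //.
  apply: leq_ltn_trans (size_sum _ _ _) _; rewrite ltnS.
  apply/bigmax_leqP => i _; rewrite size_polyXn.
  by rewrite ltn_exp2l ?r_gt1.
have nz : P != 0 by rewrite -size_poly_eq0 szP.
have := max_poly_roots nz (rs := enum [set x : F | T x == 0]).
rewrite enum_uniq szP ltnS -cardE; apply => //.
apply/allP => x; rewrite mem_enum inE => /eqP hx.
rewrite /root /P horner_sum (eq_bigr (fun i : 'I_s => x ^+ (r ^ i))) => [|i _]; first by apply/eqP; exact: hx.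
by rewrite hornerXn.
Qed.


Local Notation Fr := [set x : F | x ^+ r == x].
Local Notation K := [set x : F | T x == 0].

Lemma TFr_in x : T x \in Fr.
Proof. by rewrite inE TFr. Qed.

Lemma FrM x y : x \in Fr -> y \in Fr -> x * y \in Fr.
Proof. by rewrite !inE exprMn => /eqP -> /eqP ->. Qed.

Lemma FrV x : x \in Fr -> x^-1 \in Fr.
Proof. by rewrite !inE exprVn => /eqP ->. Qed.

Lemma FrB x y : x \in Fr -> y \in Fr -> x - y \in Fr.
Proof.
rewrite !inE => /eqP hx /eqP hy.
have := frobD 1 (x - y) y; rewrite expn1 subrK hx hy => e.
by apply/eqP; apply: (addIr y); rewrite subrK -e.
Qed.

Lemma Fr0 : 0 \in Fr.
Proof. by rewrite inE expr0n; case: (r) r_gt1. Qed.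

Lemma Fr1 : 1 \in Fr.
Proof. by rewrite inE expr1n. Qed.

Lemma card_facts :
  T @: setT = Fr /\ #|Fr| = r /\ #|K| = (r ^ s.-1)%N.
Proof.
have [_ hc] := @fiber_card F setT _ TD (fun x y _ _ => in_setT (x - y)).
rewrite cardsT cardF in hc.
have eK : [set x in setT | T x == 0] = K by apply/setP => x; rewrite !inE.
rewrite eK in hc.
have rs : ((r ^ s) = r * r ^ s.-1)%N by rewrite -expnS prednK.
have sub : T @: setT \subset Fr.
  by apply/subsetP => y /imsetP [x _ ->]; apply: TFr_in.
have pos : (0 < r ^ s.-1)%N by rewrite expn_gt0 (ltnW r_gt1).
have ge : (r <= #|T @: setT|)%N.
  rewrite -(leq_pmul2r pos) -rs hc leq_mul2l card_K_le orbT //.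
have [le1 eq1] := subset_leqif_cards sub.
have eqc : #|T @: setT| = #|Fr|.
  by apply/eqP; rewrite eqn_leq le1 (leq_trans card_Fr_le ge).
have eI : T @: setT = Fr by apply/eqP; rewrite -eq1 eqc.
have cFr : #|Fr| = r by apply/eqP; rewrite eqn_leq card_Fr_le -eqc ge.
split => //; split => //.
apply/eqP; rewrite -(eqn_pmul2l (ltnW r_gt1)) -rs hc eqc cFr //.
Qed.

Variable phi : F -> algC.
Hypotheses (mc : mult_char phi) (ps : ~~ (p %| s)%N).

Local Notation c := (- (s%:R : F)).
Local Notation S := [set x : F | T x == c].

Lemma c_nz : c != 0.
Proof. by rewrite oppr_eq0 -(dvdn_charf pch). Qed.

Lemma c_Fr : c \in Fr.
Proof. by rewrite -T1 -TN TFr_in. Qed.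

Lemma S_nz x : x \in S -> x != 0.
Proof.
rewrite inE; apply: contraTneq => ->; rewrite T0 eq_sym; exact: c_nz.
Qed.

Lemma card_S : #|S| = #|K|.
Proof.
have [fib _] := @fiber_card F setT _ TD (fun x y _ _ => in_setT (x - y)).
have [eI _] := card_facts.
have := fib c; rewrite eI c_Fr => /(_ isT).
have e1 : [set x in setT | T x == c] = S by apply/setP => x; rewrite !inE.
have e2 : [set x in setT | T x == 0] = K by apply/setP => x; rewrite !inE.
by rewrite e1 e2.
Qed.

Definition Nu (u : F) := #|[set y in S | u * y \in S]|.

Lemma N_Fr u : u \in Fr -> Nu u = if u == 1 then #|K| else 0%N.
Proof.
move=> uFr; have ur : u ^+ r = u by apply/eqP; rewrite inE in uFr.
rewrite /Nu -card_S.
have e : forall y, y \in S -> (u * y \in S) = (u == 1).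
  move=> y; rewrite !inE => /eqP Ty; rewrite TZ //.
  rewrite Ty; apply/eqP/eqP => [h|->]; last by rewrite mul1r.
  by apply: (mulIf c_nz); rewrite mul1r.
case: eqP => [->|ne].
  by apply: eq_card => y; rewrite !inE; case Sy: (T y == c); rewrite /= ?mul1r ?Sy.
apply/eqP; rewrite cards_eq0; apply/eqP/setP => y; rewrite !inE.
case Sy: (T y == c) => //=; have := e y; rewrite !inE Sy => /(_ isT) ->.
by apply/eqP.
Qed.

Lemma N_notFr u : u \notin Fr -> (Nu u * r)%N = #|K|.
Proof.
move=> uFr.
have [eI [cFr cK]] := card_facts.
pose h := fun y => T (u * y).
have hD : forall x y, h (x + y) = h x + h y by move=> x y; rewrite /h mulrDr TD.
have KB : forall x y, x \in K -> y \in K -> x - y \in K.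
  by move=> x y; rewrite !inE TB => /eqP -> /eqP ->; rewrite subrr.
have [hfib hcard] := @fiber_card F K h hD KB.
have FrE : forall x, (x \in Fr) = (x ^+ r == x) by move=> x; rewrite inE.
have [k0 k0K hk0] : exists2 k0, k0 \in K & h k0 != 0.
  case: (boolP [exists k0, (k0 \in K) && (h k0 != 0)]).
    by move=> /existsP [k0 /andP [k0K hk0]]; exists k0.
  move=> /existsPn allk.
  have hK : forall k, k \in K -> h k = 0.
    by move=> k kK; have := allk k; rewrite kK /= negbK => /eqP.
  have : (1 : F) \in T @: setT by rewrite eI Fr1.
  move=> /imsetP [y1 _ Ty1].
  pose v := T (u * y1).
  have vr : v ^+ r = v by rewrite TFr.
  have zero : forall y, T ((u - v) * y) = 0.
    move=> y.
    have Tyr : T y ^+ r = T y by rewrite TFr.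
    have kK : y - T y * y1 \in K by rewrite inE TB TZ // -Ty1 mulr1 subrr.
    have := hK _ kK; rewrite /h mulrBr TB mulrCA (TZ _ _ Tyr) => e.
    by rewrite mulrBl TB (TZ _ _ vr) [v * _]mulrC.
  have uv : u - v != 0.
    by apply: contraNneq uFr; move/eqP; rewrite subr_eq0 => /eqP ->; rewrite FrE vr.
  have KT : K = setT.
    apply/setP => z; rewrite !inE -(divfK uv z) mulrC.
    by rewrite zero eqxx.
  have := card_K_le; rewrite KT cardsT cardF.
  rewrite leqNgt ltn_exp2l ?r_gt1 //.
  by case: (s) s0 => // s' _ /=; rewrite ltnSn.
have hFr : forall x, h x \in Fr by move=> x; apply: TFr_in.
have hI : h @: K = Fr.
  apply/setP => l; apply/imsetP/idP => [[k _ ->] | lFr]; first exact: hFr.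
  have w_r : h k0 ^+ r = h k0 by apply/eqP; rewrite -FrE hFr.
  have lw : (l / h k0) ^+ r = l / h k0.
    by apply/eqP; rewrite -FrE FrM // FrV // FrE w_r.
  exists ((l / h k0) * k0).
    by rewrite inE TZ //; move: k0K; rewrite inE => /eqP ->; rewrite mulr0.
  by rewrite /h mulrCA TZ // divfK.
have [y0 _ Ty0] : exists2 y0, y0 \in setT & c = T y0.
  by apply/imsetP; rewrite eI c_Fr.
pose c' := c - T (u * y0).
have c'I : c' \in h @: K by rewrite hI FrB // ?c_Fr // TFr_in.
have eN : Nu u = #|[set k in K | h k == c']|.
  rewrite /Nu -[RHS](card_imset _ (addIr y0)).
  apply: eq_card => y; rewrite !inE.
  apply/andP/imsetP.
    move=> [/eqP Ty /eqP Tuy]; exists (y - y0); last by rewrite subrK.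
    by rewrite !inE TB Ty -Ty0 subrr eqxx /= /h mulrBr TB Tuy.
  move=> [k]; rewrite inE => /andP [kK /eqP hk] ->.
  move: kK; rewrite inE => /eqP Tk.
  split; first by rewrite TD Tk add0r -Ty0.
  by move: hk; rewrite /h /c' mulrDr TD => ->; rewrite subrK.
by rewrite eN hfib // hcard hI cFr mulnC.
Qed.

Hypothesis nt : ~ trivial_char phi.

Lemma sum_nz0 : \sum_(u | u != 0) phi u = 0.
Proof.
have [a /andP [anz pa]] : exists a, (a != 0) && (phi a != 1).
  case: (boolP [exists a, (a != 0) && (phi a != 1)]) => [/existsP //|/existsPn h].
  exfalso; apply: nt => x xnz.
  by have := h x; rewrite xnz /= negbK => /eqP.
apply: (@sum_zero F phi mc (fun u => u != 0) a anz pa) => // u; by rewrite mulf_eq0 (negbTE anz).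
Qed.

Lemma BB : let B := \sum_(x : F | (x != 0) && (T (x + 1) == 0)) phi x in
  B * B^* = #|K|%:R - (#|K|%:R / r%:R) * \sum_(u in Fr | u != 0) phi u.
Proof.
move=> B.
have eB : B = \sum_(x in S) phi x.
  apply: eq_bigl => x; rewrite inE TD T1.
  case: (T x =P c) => [Tx|Tx].
    by rewrite Tx addNr eqxx andbT; apply: S_nz; rewrite inE Tx.
  by rewrite addr_eq0 (introF eqP Tx) andbF.
have step1 : B * B^* = \sum_(y in S) \sum_(u : F) phi u * (u * y \in S)%:R.
  rewrite eB rmorph_sum /= mulr_suml.
  rewrite (eq_bigr (fun x => \sum_(y in S) phi x * (phi y)^*)); last first.
    by move=> x _; rewrite mulr_sumr.
  rewrite exchange_big /=; apply: eq_bigr => y yS.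
  have ynz := S_nz y yS.
  rewrite [LHS](reindex_inj (mulIf ynz)) /= big_mkcond /=.
  apply: eq_bigr => u _; case: ifP => h; rewrite ?mulr1 ?mulr0 //.
  rewrite phi_conj // -phiM ?invr_eq0 ?(S_nz _ h) // mulfK //.
have step2 : B * B^* = \sum_(u : F) phi u * (Nu u)%:R.
  rewrite step1 exchange_big /=; apply: eq_bigr => u _.
  rewrite -mulr_sumr; congr (_ * _).
  rewrite /Nu -sum1_card natr_sum big_mkcond [RHS]big_mkcond /=.
  by apply: eq_bigr => y _; rewrite !inE; case: (T y == c); case: (T (u * y) == c).
have rnz : (r%:R : algC) != 0 by rewrite pnatr_eq0 -lt0n expn_gt0 prime_gt0.
rewrite step2 (bigID (fun u => u \in Fr)) /=.
have -> : \sum_(u | u \in Fr) phi u * (Nu u)%:R = #|K|%:R.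
  rewrite (bigD1 1) ?Fr1 //= N_Fr ?Fr1 // eqxx (@phi1 F phi mc) mul1r big1 ?addr0 //.
  by move=> u /andP [uFr u1]; rewrite N_Fr // (negbTE u1) mulr0.
have -> : \sum_(u | u \notin Fr) phi u * (Nu u)%:R =
    (#|K|%:R / r%:R) * \sum_(u | u \notin Fr) phi u.
  rewrite mulr_sumr; apply: eq_bigr => u uFr; rewrite mulrC; congr (_ * _).
  by rewrite -(N_notFr u uFr) natrM mulfK.
have -> : \sum_(u | u \notin Fr) phi u = - \sum_(u in Fr | u != 0) phi u.
  apply/eqP; rewrite -addr_eq0; apply/eqP.
  rewrite -[RHS]sum_nz0 [RHS](bigID (fun u => u \in Fr)) /= addrC.
  congr (_ + _); apply: eq_bigl => u.
    by case: (u =P 0) => [->|]; rewrite ?Fr0 ?andbT.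
  by rewrite andbC.
by rewrite mulrN.
Qed.

End Trace.

Lemma norm_from_sq (x y : algC) : 0 <= y -> `|x| ^+ 2 = y ^+ 2 -> `|x| = y.
Proof. by move=> y0 h; rewrite -(sqrCK (normr_ge0 x)) h sqrCK. Qed.

Theorem mainTheorem5 (p t s : nat) (F : finFieldType) (phi : F -> algC) :
  prime p -> odd p -> (0 < t)%N -> (0 < s)%N -> ~~ (p %| s)%N ->
  #|F| = ((p ^ t) ^ s)%N ->
  mult_char phi -> ~ trivial_char phi ->
  let r := (p ^ t)%N in
  let q := (r ^ s)%N in
  let B := \sum_(x : F | (x != 0) && (trace_qr r s (x + 1) == 0)) phi x in
  (~ conj_restr_trivial r phi -> `|B| = sqrtC q%:R / sqrtC r%:R) /\
  (conj_restr_trivial r phi -> `|B| = sqrtC q%:R / r%:R).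
Proof.
move=> pp op t0 s0 ps cF mc nt r q B.
have hBB := @BB p t s F pp t0 s0 cF phi mc ps nt; simpl in hBB.
have [_ [cFr cK]] := @card_facts p t s F pp t0 s0 cF.
have nB : `|B| ^+ 2 = B * B^* by rewrite normCK.
rewrite -/r -/B in hBB cFr cK.
rewrite cK in hBB.
set k := (r ^ s.-1)%N in hBB.
set X := \sum_(u in _ | u != 0) phi u in hBB.
have qrk : q = (r * k)%N by rewrite /q /k -expnS prednK.
have rgt1 : (1 < r)%N := @r_gt1 p t pp t0.
have rnz : (r%:R : algC) != 0 by rewrite pnatr_eq0 -lt0n ltnW.
have FrE : forall x : F, (x \in [set x : F | x ^+ r == x]) = (x ^+ r == x).
  by move=> x; rewrite inE.
split.
  move=> ntr.
  have X0 : X = 0.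
    have [a /and3P [aFr anz pa]] : exists a : F, [&& a ^+ r == a, a != 0 & phi a != 1].
      case: (boolP [exists a : F, [&& a ^+ r == a, a != 0 & phi a != 1]]) =>
         [/existsP //|/existsPn h].
      exfalso; apply: ntr => x xnz xr.
      have := h x; rewrite xr xnz eqxx /= negbK => /eqP ->; exact: conjC1.
    apply: (@sum_zero F phi mc _ a anz pa).
      by move=> u /andP [].
    move=> u; rewrite mulf_eq0 (negbTE anz) /=; congr (_ && _).
    have aFr' : a \in [set x : F | x ^+ r == x] by rewrite FrE.
    apply/idP/idP => h.
      by rewrite -(mulKf anz u); apply: FrM => //; apply: FrV.
    by apply: FrM.
  rewrite X0 mulr0 subr0 in hBB.
  apply: norm_from_sq; first by rewrite divr_ge0 ?sqrtC_ge0 ?ler0n.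
  rewrite nB hBB exprMn exprVn !sqrtCK qrk natrM.
  by field.
move=> tr.
have X1 : X = (r%:R - 1).
  rewrite /X (eq_bigr (fun _ => 1)); last first.
    move=> u /andP [uFr unz]; rewrite -[phi u]conjCK tr ?conjC1 //.
    by apply/eqP; rewrite -FrE.
  rewrite (eq_bigl (fun u => u \in [set x : F | x ^+ r == x] :\ 0)); last first.
    by move=> u; rewrite in_setD1 andbC.
  rewrite sumr_const.
  have F0 : (0:F) \in [set x : F | x ^+ r == x].
    by rewrite FrE expr0n; case: (r) rgt1.
  have := cardsD1 0 [set x : F | x ^+ r == x].
  rewrite cFr F0 => e.
  rewrite add1n in e.
  have -> : #|[set x : F | x ^+ r == x] :\ 0| = (r - 1)%N by rewrite [in RHS]e subSS subn0.
  by rewrite natrB ?(ltnW rgt1).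
rewrite X1 in hBB.
apply: norm_from_sq; first by rewrite divr_ge0 ?sqrtC_ge0 ?ler0n.
rewrite nB hBB exprMn exprVn sqrtCK qrk natrM.
field; exact: rnz.
Qed.
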